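(* Let $S=[a+1,a+m]$ with $a+m\le n$ and let $r\ge0$. Let $c_1,\dots,c_{r+1}\in S$, let $\lambda=(\lambda_1,\dots,\lambda_d)$ be a composition of $r+1$ with partial sums $p_j=\sum_{i=1}^j\lambda_i$ ($p_0=0$), let $\gamma_1,\dots,\gamma_d$ be nonnegative integers with $\gamma_j\ge\gamma_{j-1}+\lambda_{j-1}$ for $j\ge2$, set $\delta_j=k-\lambda_j-\gamma_j$, and let $a_{j,i},b_{j,i}\in[n]$ be arbitrary. Then the polynomial $$\sum_{\sigma\in\mathfrak S_{r+1}}\operatorname{sign}(\sigma)\prod_{j=1}^d[a_{j,1},\dots,a_{j,\gamma_j},c_{\sigma(p_{j-1}+1)},\dots,c_{\sigma(p_j)},b_{j,1},\dots,b_{j,\delta_j}]$$ vanishes on $X_{S\le r}$, i.e. lies in the ideal $\mathcal J_{S\le r}$.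
   Context: Let $\Bbbk$ be algebraically closed of characteristic $0$, $1\le k<n$. $R(k,n)=\Bbbk[[\mathbf a]:\mathbf a\in\binom{[n]}{k}]$ is the polynomial ring in Plücker variables. For a sequence $x_1,\dots,x_k$ in $[n]$, $[x_1,\dots,x_k]$ is $0$ if two entries coincide and otherwise $\operatorname{sign}(\tau)[\{x_1,\dots,x_k\}]$, $\tau$ the sorting permutation (so it represents the $k\times k$ minor on columns $x_1,\dots,x_k$ in that order). For $S\subseteq[n]$, $r\ge0$, $X_{S\le r}=\{V\in\mathrm{Gr}(k,n):\text{the columns indexed by }S\text{ of a matrix with row span }V\text{ have rank}\le r\}$, and $\mathcal J_{S\le r}\subseteq R(k,n)$ is its defining ideal under the Plücker embedding. *)

(* Defs.v *)
From HB Require Import structures.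
From mathcomp Require Import all_boot all_order all_algebra all_fingroup.
From mathcomp Require Import mpoly.
Set Implicit Arguments. Unset Strict Implicit. Unset Printing Implicit Defensive.
Import GRing.Theory.
Local Open Scope ring_scope.

(* Columns [n] = {1..n} are represented by ordinals 'I_n (column x <-> ordinal x-1). *)

Definition kset (k n : nat) := {A : {set 'I_n} | #|A| == k}.

Definition npl (k n : nat) := #|{: kset k n}|.

Definition plring (F : fieldType) (k n : nat) := {mpoly F[npl k n]}.

Definition pvar (F : fieldType) (k n : nat) (A : kset k n) : plring F k n :=
  'X_(enum_rank A).

(* number of inversions of a sequence; the sign of the sorting permutation
   of a duplicate-free sequence is (-1)^inversions *)
Definition inversions n (x : seq 'I_n) : nat :=
  \sum_(i < size x) \sum_(j < size x | i < j)
     ((nth 0%N (map val x) j < nth 0%N (map val x) i)%N : nat).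

(* The bracket [x_1,...,x_k]: 0 if two entries coincide (or if the sequence
   does not have length k), otherwise sign(tau) [ {x_1,...,x_k} ]. *)
Definition bracket (F : fieldType) (k n : nat) (x : seq 'I_n) : plring F k n :=
  match (insub [set i in x] : option (kset k n)) with
  | Some A =>
      if uniq x && (size x == k) then (-1) ^+ inversions x * pvar F A else 0
  | None => 0
  end.

(* the columns of A, in increasing order *)
Definition kcols k n (A : kset k n) (i : 'I_k) : 'I_n :=
  @enum_val _ (mem (val A)) (cast_ord (esym (eqP (valP A))) i).

Definition pluecker (F : fieldType) k n (M : 'M[F]_(k, n)) (A : kset k n) : F :=
  \det (colsub (@kcols k n A) M).

Definition pl_val (F : fieldType) k n (M : 'M[F]_(k, n)) : 'I_(npl k n) -> F :=
  fun i => pluecker M (enum_val i).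

Definition cols_S (F : fieldType) k n (S : {set 'I_n}) (M : 'M[F]_(k, n)) :=
  colsub (fun j : 'I_#|S| => @enum_val _ (mem S) j) M.

(* M (of full rank k, so that its row span V is a point of Gr(k,n))
   represents a point of X_{S <= r} *)
Definition in_X (F : fieldType) k n (S : {set 'I_n}) (r : nat) (M : 'M[F]_(k, n)) :=
  (\rank M == k)%N && (\rank (cols_S S M) <= r)%N.

(* J_{S<=r}: the ideal of all polynomials of R(k,n) vanishing on X_{S<=r}
   (under the Plücker embedding, i.e. on the affine cone) *)
Definition J_ideal (F : fieldType) k n (S : {set 'I_n}) (r : nat)
    (p : plring F k n) : Prop :=
  forall M : 'M[F]_(k, n), in_X S r M -> p.@[pl_val M] = 0.

(* the interval S = [a+1, a+m] of [n], as ordinals a <= i < a+m *)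
Definition ivS n (a m : nat) : {set 'I_n} := [set i : 'I_n | (a <= i < a + m)%N].

(* Main.v *)
Require Import Defs.
From HB Require Import structures.
From mathcomp Require Import all_boot all_order all_algebra all_fingroup.
From mathcomp Require Import mpoly zify.
Import GRing.Theory.
Local Open Scope ring_scope.

Fixpoint invr (s : seq nat) : nat :=
  if s is a :: t then (count (fun z => z < a) t + invr t)%N else 0%N.

Lemma invr_swap s1 a b s2 : (b < a)%N ->
  invr (s1 ++ a :: b :: s2) = (invr (s1 ++ b :: a :: s2)).+1.
Proof.
move=> ba; elim: s1 => [|y s1 IH] /=.
  rewrite ba ltnNge (ltnW ba) /=; lia.
rewrite IH !count_cat /=; lia.
Qed.

Lemma invr_sorted s : sorted leq s -> invr s = 0%N.
Proof.
elim: s => [|a t IH] //= pth.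
rewrite IH ?(path_sorted pth) // addn0.
apply/eqP; rewrite -leqn0 leqNgt -has_count; apply/hasPn => z.
by move/(allP (order_path_min leq_trans pth)); rewrite /= -leqNgt.
Qed.

Lemma count_sum_nth (p : pred nat) (s : seq nat) :
  count p s = (\sum_(i < size s) (p (nth 0%N s i) : nat))%N.
Proof.
elim: s => [|x s IH] /=; first by rewrite big_ord0.
by rewrite big_ord_recl IH.
Qed.

Lemma inv_sum (s : seq nat) :
  (\sum_(i < size s) \sum_(j < size s | i < j)
     ((nth 0%N s j < nth 0%N s i)%N : nat))%N = invr s.
Proof.
elim: s => [|a t IH]; first by rewrite big_ord0.
rewrite /= big_ord_recl /= -IH; congr (_ + _)%N.
  rewrite big_mkcond big_ord_recl /= add0n count_sum_nth.
  by apply: eq_bigr => i _.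
apply: eq_bigr => i _.
rewrite big_mkcond big_ord_recl /= add0n [RHS]big_mkcond.
by apply: eq_bigr => j _.
Qed.

Lemma inversions_invr n (x : seq 'I_n) : inversions x = invr (map val x).
Proof. by rewrite /inversions -inv_sum size_map. Qed.

Lemma not_sorted_split (T : Type) (e : rel T) (s : seq T) : ~~ sorted e s ->
  exists s1 a b s2, s = s1 ++ a :: b :: s2 /\ ~~ e a b.
Proof.
elim: s => [|a t IH] //=.
case: t IH => [|b t'] IH //=.
case eab: (e a b) => /=; last by move=> _; exists [::], a, b, t'; rewrite eab.
move=> /IH [s1 [x [y [s2 [-> nxy]]]]].
by exists (a :: s1), x, y, s2.
Qed.
Arguments not_sorted_split {T e s}.

Section Detc.
Variables (F : fieldType) (k : nat).

Definition detc (ys : seq 'cV[F]_k) : F := \det (\matrix_(i < k, j < k) (nth 0 ys j) i 0).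

Lemma detcT ys : detc ys = \det (\matrix_(i < k, j < k) (nth 0 ys i) j 0).
Proof. by rewrite /detc -det_tr; congr (\det _); apply/matrixP => i j; rewrite !mxE. Qed.

Lemma detc_lin xs zs (x y : 'cV[F]_k) (al : F) : (size xs < k)%N ->
  detc (xs ++ (al *: x + y) :: zs) = al * detc (xs ++ x :: zs) + detc (xs ++ y :: zs).
Proof.
move=> lt; rewrite !detcT.
set C := (\matrix_(i < k, j < k) (nth 0 (xs ++ y :: zs) i) j 0).
rewrite -(mul1r (\det C)).
apply: (@determinant_multilinear _ _ _ _ _ (Ordinal lt)).
- apply/rowP => j; rewrite !mxE /= !nth_cat ltnn subnn /= !mxE.
  by rewrite mul1r.
- apply/matrixP => i j; rewrite !mxE /= !nth_cat.
  case: ltnP => // h.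
  rewrite /bump in h *; case: (leqP (size xs) i) h => hh /= h; last by move: h; rewrite add0n leqNgt hh.
  by rewrite add1n subSn.

- apply/matrixP => i j; rewrite !mxE /= !nth_cat.
  case: ltnP => // h.
  rewrite /bump in h *; case: (leqP (size xs) i) h => hh /= h; last by move: h; rewrite add0n leqNgt hh.
  by rewrite add1n subSn.

Qed.

Lemma detc_swap xs a b zs : size (xs ++ a :: b :: zs) = k ->
  detc (xs ++ b :: a :: zs) = - detc (xs ++ a :: b :: zs).
Proof.
rewrite size_cat /= => sz.
have l1 : (size xs < k)%N by lia.
have l2 : ((size xs).+1 < k)%N by lia.
pose i1 := Ordinal l1; pose i2 := Ordinal l2.
rewrite /detc.
have -> : (\matrix_(i < k, j < k) (nth 0 (xs ++ b :: a :: zs) j) i 0)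
   = xcol i1 i2 (\matrix_(i < k, j < k) (nth 0 (xs ++ a :: b :: zs) j) i 0).
  apply/matrixP => i j; rewrite xcolEsub !mxE.
  case: tpermP => [->|->|h1 h2]; rewrite /= !nth_cat ?ltnn ?subnn //=.
  1,2: by rewrite ltnNge leqnSn /= subSnn.
  have {h1} h1 : (j : nat) <> size xs by move=> e; apply: h1; apply: val_inj.
  have {h2} h2 : (j : nat) <> (size xs).+1 by move=> e; apply: h2; apply: val_inj.
  case: ltnP => // h.
  case E: (j - size xs)%N => [|[|m]] //=; lia.
rewrite xcolE det_mulmx /tperm_mx det_perm odd_tperm.
have -> : (i1 != i2) by rewrite -val_eqE /= neq_ltn ltnSn.
by rewrite /= expr1 mulrN1.
Qed.

Lemma detc_dup (ys : seq 'cV[F]_k) i j : (i < j)%N -> (j < k)%N ->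
  nth 0 ys i = nth 0 ys j -> detc ys = 0.
Proof.
move=> ij jk e; have ik : (i < k)%N by lia.
rewrite detcT.
apply: (@determinant_alternate _ _ _ (Ordinal ik) (Ordinal jk)).
  by rewrite -val_eqE /= neq_ltn ij.
by move=> l; rewrite !mxE /= e.
Qed.

End Detc.
Arguments detc {F k} ys.

Section Bracket.
Variables (F : fieldType) (k n : nat) (M : 'M[F]_(k, n)).

Let colM (l : 'I_n) : 'cV[F]_k := col l M.

Lemma sorted_enum (x : seq 'I_n) : uniq x -> sorted (relpre val leq) x ->
  x = enum [set i in x].
Proof.
move=> ux sx; apply: (inj_map val_inj).
apply: (irr_sorted_eq ltn_trans ltnn).
- by rewrite ltn_sorted_uniq_leq (map_inj_uniq val_inj) ux sorted_map sx.
- apply: (subseq_sorted ltn_trans (s2 := map val (enum 'I_n))); last first.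
    by rewrite val_enum_ord iota_ltn_sorted.
  apply: map_subseq; rewrite enumT /enum_mem; exact: filter_subseq.
- by apply: eq_mem_map => i; rewrite mem_enum inE.
Qed.

Lemma sign_lem (x : seq 'I_n) : uniq x -> size x = k ->
  detc (map colM x) = (-1) ^+ invr (map val x) * detc (map colM (enum [set i in x])).
Proof.
have main : forall N (x : seq 'I_n), (invr (map val x) <= N)%N -> uniq x -> size x = k ->
  detc (map colM x) = (-1) ^+ invr (map val x) * detc (map colM (enum [set i in x])).
  elim => [|N IH] y le uy sy.
  - case: (boolP (sorted (relpre val leq) y)) => sy'.
      by rewrite -sorted_enum // invr_sorted ?sorted_map // expr0 mul1r.
    have [y1 [a [b [y2 [ey nab]]]]] := not_sorted_split sy'.
    rewrite ey map_cat /= invr_swap in le; first by [].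
    by rewrite /= -ltnNge in nab.
  - case: (boolP (sorted (relpre val leq) y)) => sy'.
      by rewrite -sorted_enum // invr_sorted ?sorted_map // expr0 mul1r.
    have [y1 [a [b [y2 [ey nab]]]]] := not_sorted_split sy'.
    have ba : (val b < val a)%N by rewrite /= -ltnNge in nab.
    set y' := y1 ++ b :: a :: y2.
    have pyy : perm_eq y' y.
      rewrite ey perm_cat2l -[b :: a :: y2]/([:: b] ++ [:: a] ++ y2).
      by rewrite perm_catCA.
    have einv : invr (map val y) = (invr (map val y')).+1.
      by rewrite ey !map_cat /= invr_swap.
    have -> : [set i in y] = [set i in y'].
      by apply/setP => i; rewrite !inE (perm_mem pyy).
    have -> : detc (map colM y) = - detc (map colM y').
      rewrite ey /y' !map_cat /= detc_swap //.
      by rewrite size_cat /= !size_map; move: sy; rewrite ey size_cat.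
    rewrite IH; first by rewrite einv exprS mulN1r mulNr.
    - by rewrite -ltnS -einv.
    - by rewrite (perm_uniq pyy).
    - by rewrite (perm_size pyy).
by move=> ux sx; apply: (main _ x (leqnn _)).
Qed.

Lemma pluecker_detc (A : kset k n) :
  pluecker M A = detc (map colM (enum (val A))).
Proof.
rewrite /pluecker /detc; congr (\det _); apply/matrixP => i j; rewrite !mxE.
have sz : size (enum (val A)) = k by rewrite -cardE (eqP (valP A)).
rewrite (nth_map (kcols A j)) ?sz // /colM !mxE.
congr (M i _); rewrite /kcols /enum_val /=.
by apply: set_nth_default; rewrite sz.
Qed.

Lemma bracket_eval (x : seq 'I_n) : size x = k ->
  (bracket F k x).@[pl_val M] = detc (map colM x).
Proof.
move=> sx.
case: (boolP (uniq x)) => ux.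
  have cA : #|[set i in x]| == k by rewrite cardsE (card_uniqP ux) sx.
  rewrite /bracket (insubT (fun A : {set 'I_n} => #|A| == k) cA) ux sx eqxx /=.
  rewrite mevalM rmorphXn rmorphN1 /pvar mevalXU /pl_val enum_rankK.
  by rewrite inversions_invr pluecker_detc (@sign_lem x ux sx).
have -> : bracket F k x = 0.
  by rewrite /bracket; case: insubP => //= *; rewrite (negbTE ux).
rewrite meval0.
case: x sx ux => [|x0 x] sx ux; first by [].
have [i [j [ij jlt e]]] := uniqPn x0 ux.
symmetry; apply: (@detc_dup _ _ _ i j ij); first by rewrite -sx.
rewrite !(nth_map x0) //; first by rewrite e.
exact: ltn_trans ij jlt.
Qed.

End Bracket.

Section Gf.
Variables (F : fieldType) (k r : nat).
Variables (js : seq nat) (A B : nat -> seq 'cV[F]_k) (blk : nat -> seq nat).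

Definition lin (phi : 'cV[F]_k -> F) :=
  forall al x y, phi (al *: x + y) = al * phi x + phi y.

Definition term (w : nat -> 'cV[F]_k) :=
  \prod_(j <- js) detc (A j ++ map w (blk j) ++ B j).

Definition Gf (u : 'I_r.+1 -> 'cV[F]_k) :=
  \sum_(s : 'S_r.+1) (-1) ^+ s * term (fun t => u (s (inord t))).

Lemma term_ext w w' : (forall t, w t = w' t) -> term w = term w'.
Proof.
move=> e; rewrite /term; apply: eq_bigr => j _.
by rewrite (eq_map e).
Qed.

Lemma Gf_ext u u' : (forall l, u l = u' l) -> Gf u = Gf u'.
Proof.
move=> e; rewrite /Gf; apply: eq_bigr => s _; congr (_ * _).
by apply: term_ext => t.
Qed.

Lemma map_cond0 (Q : pred nat) (e : nat -> 'cV[F]_k) x s : count Q s = 0%N ->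
  map (fun t => if Q t then x else e t) s = map e s.
Proof.
move=> c0; apply/eq_in_map => t ts.
have : ~~ has Q s by rewrite has_count c0.
by move/hasPn/(_ t ts)/negbTE ->.
Qed.

Lemma detc_blk_lin As Bs (bl : seq nat) (Q : pred nat) (e : nat -> 'cV[F]_k) :
  count Q bl = 1%N -> (size As + size bl + size Bs = k)%N ->
  lin (fun x => detc (As ++ map (fun t => if Q t then x else e t) bl ++ Bs)).
Proof.
move=> c1 sz al x y.
have hs : has Q bl by rewrite has_count c1.
set i := find Q bl.
have hi : (i < size bl)%N by rewrite -has_find.
have Qi : Q (nth 0%N bl i) by apply: nth_find.
have ebl : bl = take i bl ++ nth 0%N bl i :: drop i.+1 bl.
  by rewrite -drop_nth // cat_take_drop.
have hc := c1; rewrite ebl count_cat /= Qi in hc.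
have c1' : count Q (take i bl) = 0%N by lia.
have c2' : count Q (drop i.+1 bl) = 0%N by lia.
have sz1 : (size (As ++ map e (take i bl)) < k)%N.
  rewrite size_cat size_map size_take hi; lia.
rewrite ebl !map_cat /= Qi !map_cond0 //.
rewrite -!catA !cat_cons !catA.
exact: detc_lin.
Qed.

Lemma count_flat0 (Q : pred nat) (s : seq nat) j :
  count Q (flatten [seq blk j | j <- s]) = 0%N -> j \in s -> count Q (blk j) = 0%N.
Proof.
elim: s => [|j'' s IH] //=; rewrite count_cat inE => c0 /orP [/eqP ->|h].
  by lia.
by apply: IH => //; lia.
Qed.

Lemma prod_lin (js' : seq nat) (Q : pred nat) (e : nat -> 'cV[F]_k) :
  count Q (flatten [seq blk j | j <- js']) = 1%N ->
  (forall j, j \in js' -> size (A j) + size (blk j) + size (B j) = k)%N ->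
  lin (fun x => \prod_(j <- js') detc (A j ++ map (fun t => if Q t then x else e t) (blk j) ++ B j)).
Proof.
elim: js' => [|j js' IH] //= c1 sz al x y.
rewrite !big_cons.
have szj : (size (A j) + size (blk j) + size (B j) = k)%N by apply: sz; rewrite inE eqxx.
have sz' : forall j', j' \in js' -> (size (A j') + size (blk j') + size (B j') = k)%N.
  by move=> j' hj'; apply: sz; rewrite inE hj' orbT.
move: c1; rewrite count_cat => c1.
case c0 : (count Q (blk j)) => [|m].
  rewrite c0 add0n in c1.
  rewrite !map_cond0 // IH //.
  by rewrite mulrDr mulrCA.
have m0 : m = 0%N by lia.
have cr : count Q (flatten [seq blk j | j <- js']) = 0%N by lia.
have pc : forall z, \prod_(j <- js') detc (A j ++ map (fun t => if Q t then z else e t) (blk j) ++ B j)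
   = \prod_(j <- js') detc (A j ++ map e (blk j) ++ B j).
  move=> z; apply: eq_big_seq => j' hj'; rewrite map_cond0 //.
  exact: (@count_flat0 Q js' j' cr hj').
rewrite !pc (@detc_blk_lin (A j) (B j) (blk j) Q e _ szj al x y); last by rewrite c0 m0.
by rewrite mulrDl mulrA.
Qed.

Lemma lin0 phi : lin phi -> phi 0 = 0.
Proof.
move=> L; have := L 1 0 0; rewrite scale1r addr0 mul1r => h.
by apply: (@addrI _ (phi 0)); rewrite addr0 -h.
Qed.

Lemma lin_sum phi (w : 'I_r.+1 -> F) (ys : 'I_r.+1 -> 'cV[F]_k) : lin phi ->
  phi (\sum_l w l *: ys l) = \sum_l w l * phi (ys l).
Proof.
move=> L.
apply: (big_ind2 (fun a b => phi a = b)).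
- exact: lin0.
- by move=> a1 b1 a2 b2 <- <-; have := L 1 a1 a2; rewrite scale1r mul1r.
- by move=> l _; have := L (w l) (ys l) 0; rewrite addr0 (@lin0 _ L) addr0.
Qed.

Hypothesis hflat : flatten [seq blk j | j <- js] = iota 0 r.+1.
Hypothesis hsz : forall j, j \in js -> (size (A j) + size (blk j) + size (B j) = k)%N.
Hypothesis h2 : (2%:R : F) != 0.

Lemma count_one (s : 'S_r.+1) (i0 : 'I_r.+1) :
  count (fun t => s (inord t) == i0) (iota 0 r.+1) = 1%N.
Proof.
rewrite (@eq_in_count _ _ (pred1 (val (s^-1 i0)%g))).
  by rewrite (count_uniq_mem _ (iota_uniq 0 r.+1)) mem_iota /= ltn_ord.
move=> t; rewrite mem_iota /= => ht.
rewrite (canF_eq (permK s)) -val_eqE /= inordK //.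
Qed.

Lemma Gf_lin u i0 : lin (fun x => Gf (fun l => if l == i0 then x else u l)).
Proof.
move=> al x y; rewrite /Gf mulr_sumr -big_split; apply: eq_bigr => s _ /=.
rewrite /term.
rewrite (@prod_lin js (fun t => s (inord t) == i0) (fun t => u (s (inord t)))) //.
  by rewrite mulrDr mulrCA.
by rewrite hflat count_one.
Qed.

Lemma Gf_alt u i l : i != l -> u i = u l -> Gf u = 0.
Proof.
move=> nil eul.
have H : Gf u = - Gf u.
  rewrite {1}/Gf (reindex_inj (mulIg (tperm i l))) /Gf -sumrN.
  apply: eq_bigr => s _.
  rewrite odd_permM odd_tperm nil signr_addb expr1 mulrN1 mulNr; congr (- (_ * _)).
  apply: term_ext => t; rewrite permM.
  by case: tpermP => [->|->|] //.
have : Gf u *+ 2 = 0 by rewrite mulr2n {1}H addNr.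
rewrite -mulr_natl => /eqP; rewrite mulf_eq0 (negbTE h2) /=.
by move/eqP.
Qed.

Lemma Gf_dep u (v : 'I_r.+1 -> F) l0 : v l0 != 0 -> \sum_l v l *: u l = 0 -> Gf u = 0.
Proof.
move=> vl0 hs.
pose phi := fun x => Gf (fun l => if l == l0 then x else u l).
have L : lin phi by apply: Gf_lin.
have := @lin_sum phi v u L; rewrite hs (@lin0 _ L) (bigD1 l0) //= big1 ?addr0.
  have -> : phi (u l0) = Gf u.
    by apply: Gf_ext => l; case: eqP => [->|].
  move/esym/eqP; rewrite mulf_eq0 (negbTE vl0) /=.
  by move/eqP.
move=> l nl; rewrite /phi.
rewrite (@Gf_alt _ l0 l) ?mulr0 //; first by rewrite eq_sym.
by rewrite eqxx; case: eqP.
Qed.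

End Gf.

Lemma flat_iota (lam : nat -> nat) d' :
  flatten [seq iota (\sum_(1 <= i < j.-1.+1) lam i)%N (lam j) | j <- iota 1 d']
  = iota 0 (\sum_(1 <= i < d'.+1) lam i)%N.
Proof.
elim: d' => [|d' IH]; first by rewrite big_geq.
have -> : iota 1 d'.+1 = iota 1 d' ++ [:: d'.+1].
  by rewrite -(addn1 d') iotaD addnC.
rewrite map_cat flatten_cat IH /= cats0.
by rewrite [in RHS]big_nat_recr //= iotaD add0n.
Qed.

Theorem proposition5p1
  (F : closedFieldType) (hchar : [pchar F] =i pred0)
  (k n : nat) (hk1 : (1 <= k)%N) (hkn : (k < n)%N)
  (a m : nat) (ham : (a + m <= n)%N) (r : nat)
  (c : 'I_r.+1 -> 'I_n) (hc : forall i, c i \in @ivS n a m)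
  (d : nat) (lambda : nat -> nat)
  (hlpos : forall j, (1 <= j <= d)%N -> (1 <= lambda j)%N)
  (hlsum : (\sum_(1 <= j < d.+1) lambda j)%N = r.+1)
  (gamma : nat -> nat)
  (hgam : forall j, (2 <= j <= d)%N -> (gamma (j.-1) + lambda (j.-1) <= gamma j)%N)
  (hdel : forall j, (1 <= j <= d)%N -> (lambda j + gamma j <= k)%N)
  (av bv : nat -> nat -> 'I_n) :
  let p := fun j => (\sum_(1 <= i < j.+1) lambda i)%N in
  let delta := fun j => (k - lambda j - gamma j)%N in
  J_ideal (@ivS n a m) r
    (\sum_(s : 'S_r.+1) (-1) ^+ s *
       \prod_(1 <= j < d.+1)
          bracket F k
            ([seq av j i | i <- iota 1 (gamma j)]
             ++ [seq c (s (inord i)) | i <- iota (p j.-1) (lambda j)]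
             ++ [seq bv j i | i <- iota 1 (delta j)])).
Proof.
move=> p delta M; rewrite /in_X => /andP [_ hr].
pose u := fun l : 'I_r.+1 => col (c l) M.
pose js := index_iota 1 d.+1.
pose A := fun j => [seq col (av j i) M | i <- iota 1 (gamma j)].
pose B := fun j => [seq col (bv j i) M | i <- iota 1 (delta j)].
pose blk := fun j => iota (p j.-1) (lambda j).
have hsz : forall j, j \in js -> (size (A j) + size (blk j) + size (B j) = k)%N.
  move=> j; rewrite mem_index_iota => hj; rewrite !size_map !size_iota /delta.
  have := hdel j hj; lia.
have hflat : flatten [seq blk j | j <- js] = iota 0 r.+1.
  by rewrite /js /index_iota subn1 /= /blk /p flat_iota hlsum.
have h2 : (2%:R : F) != 0.
  by move/pcharf0P : hchar => ->.
rewrite rmorph_sum.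
transitivity (@Gf F k r js A B blk u).
  apply: eq_bigr => s _; rewrite rmorphM rmorphXn rmorphN1 rmorph_prod.
  congr (_ * _); rewrite /term.
  apply: eq_big_seq => j hj.
  etransitivity.
    apply: bracket_eval.
    rewrite !size_cat !size_map !size_iota.
    have := hsz j hj; rewrite /A /B /blk !size_map !size_iota; lia.
  by rewrite !map_cat -!map_comp.
pose V := \matrix_(i < k, l < r.+1) M i (c l).
have hV : (\rank V <= r)%N.
  pose S := @ivS n a m.
  pose Sel := \matrix_(j < #|S|, l < r.+1) ((@enum_val _ (mem S) j == c l)%:R : F).
  have -> : V = cols_S S M *m Sel.
    apply/matrixP => i l.
    pose j0 := enum_rank_in (hc l) (c l).
    have ej : @enum_val _ (mem S) j0 = c l by apply: enum_rankK_in.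
    rewrite !mxE (bigD1 j0) //= big1.
      by rewrite !mxE ej eqxx mulr1 addr0.
    move=> j nj; rewrite !mxE; case: eqP => [e|]; last by rewrite mulr0.
    by move: nj; rewrite -ej in e; rewrite (enum_val_inj e) eqxx.
  exact: leq_trans (mxrankM_maxl _ _) hr.
have hker : kermx V^T != 0.
  apply/eqP => h0; have := mxrank_ker V^T; rewrite h0 mxrank0 mxrank_tr; lia.
have [w wker wnz] := rowV0Pn hker.
have hw : w *m V^T = 0 by apply/eqP; rewrite -sub_kermx.
have [l0 wl0] : exists l0, w 0 l0 != 0.
  apply/existsP; apply: contraR wnz => /existsPn h; apply/eqP/rowP => l.
  by have := h l; rewrite negbK mxE => /eqP.
have hs : \sum_l w 0 l *: u l = 0.
  apply/matrixP => i z; rewrite summxE [RHS]mxE.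
  have := congr1 (fun X : 'rV_k => X 0 i) hw; rewrite [RHS]mxE mxE => e.
  by apply: etrans _ e; apply: eq_bigr => l _; rewrite !mxE.
exact: (@Gf_dep F k r js A B blk hflat hsz h2 u (fun l => w 0 l) l0 wl0 hs).
Qed.
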